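(* Let $V$ be a vertex algebra and $M$ a subspace of $V$ with $\mathbf{1}\in M$. Then $M$ is an $MZ_{0,-1}$-subspace of $V$ if and only if $M=V$.
   Context: A vertex algebra $(V,Y,\mathbf{1})$ is over $\mathbb{C}$ with vacuum $\mathbf{1}$; for $u\in V$ write $Y(u,z)=\sum_{n\in\mathbb{Z}}u_nz^{-n-1}$ with $u_n\in\operatorname{End}V$. Iterated products are nested to the right: $v_{n_1}\cdots v_{n_t}v=v_{n_1}(\cdots(v_{n_t}v))$. For a subspace $M\subseteq V$: $r_{0,-1}(M)$ is the set of $v\in V$ for which there is $m\ge 0$ with $v_{n_1}\cdots v_{n_t}v\in M$ for all $t\ge m$ and all $n_1,\dots,n_t\in\{0,-1\}$. $lsr_{0,-1}(M)$ is the set of $v\in V$ such that for every $b\in V$ there is $m\ge0$ with $b_sv_{n_1}\cdots v_{n_t}v\in M$ for all $t\ge m$ and all $s,n_1,\dots,n_t\in\{0,-1\}$. $rsr_{0,-1}(M)$ is the set of $v\in V$ such that for every $w\in V$ there is $m\ge 0$ with $(v_{n_1}\cdots v_{n_t}v)_nw\in M$ for all $t\ge m$ and all $n,n_1,\dots,n_t\in\{0,-1\}$. $sr_{0,-1}(M)=lsr_{0,-1}(M)\cap rsr_{0,-1}(M)$. $M$ is an $MZ_{0,-1}$-subspace of $V$ if $r_{0,-1}(M)=sr_{0,-1}(M)$. *)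

(* Defs.v *)
From HB Require Import structures.
From mathcomp Require Import all_boot all_order all_algebra.
From mathcomp Require Import complex.
From mathcomp Require Import Rstruct.
Set Implicit Arguments. Unset Strict Implicit. Unset Printing Implicit Defensive.
Import Order.TTheory GRing.Theory Num.Theory.
Local Open Scope ring_scope.

Notation C := (complex Rdefinitions.R).

Definition binomC (p : int) (i : nat) : C :=
  (\prod_(j < i) ((p - (j : nat)%:Z)%:~R : C)) / (i`!)%:R.

Section VA.
Variable V : lmodType C.
(* Y n u w  stands for  u_n w, where Y(u,z) = sum_n u_n z^{-n-1}. *)
Variable Y : int -> V -> V -> V.
Variable vac : V.

(* Borcherds (Jacobi) identity; the sums over i >= 0 are finite by truncation,
   formalised as: all sufficiently long partial sums agree. *)
Definition borcherds_identity : Prop :=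
  forall (u v w : V) (p q r : int), exists N : nat, forall N' : nat, (N <= N')%N ->
    \sum_(i < N') binomC p i *: Y (p + q - (i : nat)%:Z) (Y (r + (i : nat)%:Z) u v) w
    = \sum_(i < N') ((-1) ^+ i * binomC r i) *:
        (Y (p + r - (i : nat)%:Z) u (Y (q + (i : nat)%:Z) v w)
         - (-1) ^ r *: Y (q + r - (i : nat)%:Z) v (Y (p + (i : nat)%:Z) u w)).

Definition is_vertex_algebra : Prop :=
      (forall n (a : C) u1 u2 w, Y n (a *: u1 + u2) w = a *: Y n u1 w + Y n u2 w) /\
      (forall n (a : C) u w1 w2, Y n u (a *: w1 + w2) = a *: Y n u w1 + Y n u w2) /\
      (* truncation: Y(u,z)w has only finitely many negative powers of z *)
      (forall u w, exists N : int, forall n, N <= n -> Y n u w = 0) /\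
      (forall n w, Y n vac w = if n == -1 then w else 0) /\
      (* creation: Y(u,z)1 in V[[z]] and its constant term is u *)
      (forall u, (forall n, 0 <= n -> Y n u vac = 0) /\ Y (-1) u vac = u) /\
    borcherds_identity.

Definition is_subspace (M : V -> Prop) : Prop :=
  M 0 /\ forall (a : C) x y, M x -> M y -> M (a *: x + y).

Definition in01 (s : seq int) : bool := all (fun n => (n == 0) || (n == -1)) s.

(* v_{n1} ... v_{nt} v, nested to the right, for s = [:: n1; ...; nt]. *)
Definition iterv (v : V) (s : seq int) : V := foldr (fun n x => Y n v x) v s.

Definition r01 (M : V -> Prop) (v : V) : Prop :=
  exists m : nat, forall s, in01 s -> (m <= size s)%N -> M (iterv v s).

Definition lsr01 (M : V -> Prop) (v : V) : Prop :=
  forall b : V, exists m : nat, forall (k : int) s,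
    (k == 0) || (k == -1) -> in01 s -> (m <= size s)%N -> M (Y k b (iterv v s)).

Definition rsr01 (M : V -> Prop) (v : V) : Prop :=
  forall w : V, exists m : nat, forall (n : int) s,
    (n == 0) || (n == -1) -> in01 s -> (m <= size s)%N -> M (Y n (iterv v s) w).

Definition sr01 (M : V -> Prop) (v : V) : Prop := lsr01 M v /\ rsr01 M v.

Definition MZ01_subspace (M : V -> Prop) : Prop :=
  forall v, r01 M v <-> sr01 M v.
End VA.

(* Main.v *)
Require Import Defs.
From HB Require Import structures.
From mathcomp Require Import all_boot all_order all_algebra.
From mathcomp Require Import complex Rstruct.
Import GRing.Theory.
Local Open Scope ring_scope.

Theorem mainTheorem5 (V : lmodType C) (Y : int -> V -> V -> V) (vac : V)
    (HVA : is_vertex_algebra Y vac) (M : V -> Prop)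
    (HM : is_subspace M) (Hvac : M vac) :
  MZ01_subspace Y M <-> (forall v : V, M v).
Proof.
  have Hv : forall n w, Y n vac w = if n == -1 then w else 0.
    by case: HVA => _ [_ [_ [H _]]].
  split; last first.
    by move=> HMall v; split=> _; [split=> b; exists 0%N | exists 0%N].
  move=> HMZ w.
  have Hr : r01 Y M vac.
    exists 0%N => s _ _; elim: s => [|n s IH] //=.
    rewrite Hv; case: (n == -1) => //; by case: HM.
  have [_ Hrs] := proj1 (HMZ vac) Hr.
  have [m Hm] := Hrs w.
  have Hit : iterv Y vac (nseq m (-1)) = vac.
    by elim: m {Hm} => [|m IH] //=; rewrite Hv eqxx.
  have := Hm (-1) (nseq m (-1)) (orbT _).
  rewrite Hit Hv eqxx size_nseq; apply=> //.
  by elim: m {Hm Hit} => [|m IH] //=; rewrite eqxx orbT.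
Qed.
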